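(* (1) If $m,n\in\mathbb{N}$, $m\neq n$, and $m/n$ is an integer power of a prime, then the homomorphism $\rho^{\mathbb{Z}}_{\{m,n\},\{m\}}\colon\mathbb{Z}[q]^{\{m,n\}}\to\mathbb{Z}[q]^{\{m\}}$ is not surjective. (2) If $m\mid n$ and $m\neq n$, then $\rho^{\mathbb{Z}}_{\langle n\rangle,\langle m\rangle}\colon\mathbb{Z}[q]^{\langle n\rangle}\to\mathbb{Z}[q]^{\langle m\rangle}$ is not surjective. (3) For each nonempty finite subset $S\subset\mathbb{N}$, the homomorphism $\rho^{\mathbb{Z}}_{\mathbb{N},S}\colon\mathbb{Z}[q]^{\mathbb{N}}\to\mathbb{Z}[q]^S$ is not surjective.
   Context: $q$ is an indeterminate, $\Phi_n(q)$ the $n$th cyclotomic polynomial. For $S\subset\mathbb{N}$, $\Phi_S^*$ is the multiplicative subset of $\mathbb{Z}[q]$ generated by $\{\Phi_k(q):k\in S\}$, directed by divisibility, and $\mathbb{Z}[q]^S=\varprojlim_{f\in\Phi_S^*}\mathbb{Z}[q]/(f)$; for $S'\subset S$, $\rho^{\mathbb{Z}}_{S,S'}$ is induced by the identity of $\mathbb{Z}[q]$. For $n\in\mathbb{N}$, $\langle n\rangle=\{k\in\mathbb{N}:k\mid n\}$, so $\mathbb{Z}[q]^{\langle n\rangle}=\varprojlim_j\mathbb{Z}[q]/(q^n-1)^j$. *)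

(* Defs.v *)
From HB Require Import structures.
From mathcomp Require Import all_boot all_order all_algebra all_field.
Set Implicit Arguments. Unset Strict Implicit. Unset Printing Implicit Defensive.
Import GRing.Theory Num.Theory.
Local Open Scope ring_scope.

(* Divisibility in Z[q] = {poly int} (genuine divisibility over Z, not up to
   scalars). *)
Definition zdvd (f g : {poly int}) : Prop := exists h : {poly int}, g = h * f.

Definition PhiStar (S : pred nat) (f : {poly int}) : Prop :=
  exists s : seq nat, all (fun k => k \in S) s /\ f = \prod_(k <- s) 'Phi_k.

(* An element of Z[q]^S = lim_{f in Phi_S^*} Z[q]/(f) is represented by a
   family a : f |-> a f of representatives of classes in Z[q]/(f) (only the
   values on Phi_S^* matter) which is compatible with the transition maps:
   f | g  ==>  a g = a f  mod f. *)
Definition compat (S : pred nat) (a : {poly int} -> {poly int}) : Prop :=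
  forall f g, PhiStar S f -> PhiStar S g -> zdvd f g -> zdvd f (a g - a f).

(* rho_{S,S'} (for S' a subset of S) sends the family a to its restriction to
   Phi_{S'}^*.  Two families represent the same element of Z[q]^{S'} iff they
   agree modulo every f in Phi_{S'}^*. *)
Definition rho_surjective (S S' : pred nat) : Prop :=
  forall b, compat S' b ->
    exists a, compat S a /\
      forall f, PhiStar S' f -> zdvd f (a f - b f).

Definition Nset : pred nat := fun k => (0 < k)%N.
Definition divset (n : nat) : pred nat := fun k => ((0 < k) && (k %| n))%N.

(* Main.v *)
Require Import Defs.
From HB Require Import structures.
From mathcomp Require Import all_boot all_order all_algebra all_field.
From mathcomp Require Import ring zify.
Import GRing.Theory Num.Theory.
Local Open Scope ring_scope.

Lemma Xn1_comp (n p : nat) : (('X^n - 1 : {poly int}) \Po 'X^p) = 'X^(p*n) - 1.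
Proof.
by rewrite comp_polyB comp_polyC (rmorphXn (comp_poly 'X^p)) /= comp_polyX -exprM.
Qed.

Lemma prod_comp (r : seq nat) (F : nat -> {poly int}) (q : {poly int}) :
  (\prod_(d <- r) F d) \Po q = \prod_(d <- r) (F d \Po q).
Proof. exact: (rmorph_prod (comp_poly q)). Qed.

Lemma divisors_perm (p n : nat) : prime p -> (0 < n)%N ->
  perm_eq (divisors (p * n))
    ([seq (p * d)%N | d <- divisors n] ++ [seq d <- divisors n | ~~ (p %| d)%N]).
Proof.
move=> pp n0; have p0 := prime_gt0 pp.
apply: uniq_perm; first exact: divisors_uniq.
  have inj : injective (muln p) by move=> x y /eqP; rewrite eqn_pmul2l // => /eqP.
  rewrite cat_uniq (map_inj_uniq inj) divisors_uniq filter_uniq ?divisors_uniq // andbT /=.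
  apply/hasPn => x; rewrite mem_filter => /andP[px _].
  by apply/mapP => -[d _ xd]; move: px; rewrite xd dvdn_mulr.
move=> e; rewrite mem_cat mem_filter -!dvdn_divisors ?muln_gt0 ?p0 //.
apply/idP/idP.
  move=> epn; case pe: (p %| e)%N.
    apply/orP; left; apply/mapP; exists (e %/ p)%N.
      by rewrite -dvdn_divisors // -(dvdn_pmul2l p0) mulnC divnK.
    by rewrite mulnC divnK.
  apply/orP; right; rewrite /=.
  have cep : coprime e p by rewrite coprime_sym prime_coprime // pe.
  by rewrite -(Gauss_dvdr n cep).
case/orP.
  case/mapP => d dn ->; move: dn; rewrite -dvdn_divisors // => dn.
  by rewrite dvdn_pmul2l.
by case/andP => _ en; rewrite dvdn_mull.
Qed.

Definition cf (p d : nat) : {poly int} := if (p %| d)%N then 1 else 'Phi_d.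

Lemma cf_monic p d : cf p d \is monic.
Proof. by rewrite /cf; case: ifP => _; rewrite ?monic1 ?Cyclotomic_monic. Qed.

Lemma cycl_comp (p n : nat) : prime p -> (0 < n)%N ->
  'Phi_n \Po 'X^p = 'Phi_(p * n) * cf p n.
Proof.
elim/ltn_ind: n => n IH pp n0.
have E: \prod_(d <- divisors n) ('Phi_d \Po 'X^p) =
        \prod_(d <- divisors n) ('Phi_(p * d) * cf p d).
  rewrite -prod_comp prod_Cyclotomic // Xn1_comp -prod_Cyclotomic; last by rewrite muln_gt0 prime_gt0.
  rewrite (perm_big _ (@divisors_perm p n pp n0)) big_cat /= big_map big_filter big_split /=.
  congr (_ * _); rewrite big_mkcond /=; apply: eq_bigr => d _; rewrite /cf.
  by case: (p %| d)%N.
have nn : n \in divisors n by rewrite -dvdn_divisors.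
move: E; rewrite (big_rem n nn) [X in _ = X](big_rem n nn) /=.
have -> : \prod_(d <- rem n (divisors n)) ('Phi_d \Po 'X^p) =
          \prod_(d <- rem n (divisors n)) ('Phi_(p * d) * cf p d).
  apply: eq_big_seq => d; rewrite mem_rem_uniq ?divisors_uniq // inE.
  case/andP => dn; rewrite -dvdn_divisors // => ddn.
  have d0 : (0 < d)%N by apply: dvdn_gt0 ddn.
  by apply: IH => //; rewrite ltn_neqAle dn dvdn_leq.
apply: mulIf; apply: monic_neq0; apply: monic_prod => d _.
by rewrite monicMl ?Cyclotomic_monic ?cf_monic.
Qed.

Lemma Fp_comp_Xp (p : nat) (h : {poly 'F_p}) : prime p -> h \Po 'X^p = h ^+ p.
Proof.
move=> pp.
have pc : p \in [pchar {poly 'F_p}] by rewrite (rmorph_pchar polyC) ?pchar_Fp.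
elim/poly_ind: h => [|h c IH]; first by rewrite comp_poly0 expr0n /= gtn_eqF ?prime_gt0.
rewrite comp_polyD comp_polyC comp_polyM comp_polyX IH.
rewrite -!(pFrobenius_autE pc) rmorphD rmorphM /= !(pFrobenius_autE pc).
rewrite -rmorphXn /=.
have cp : c ^+ p = c by rewrite -[X in c ^+ X](card_Fp pp) expf_card.
by rewrite cp.
Qed.

Lemma frob_comp (p : nat) (g : {poly int}) : prime p ->
  map_poly (intr : int -> 'F_p) (g \Po 'X^p) = (map_poly intr g) ^+ p.
Proof.
by move=> pp; rewrite map_comp_poly map_polyXn Fp_comp_Xp.
Qed.

Lemma Phi_pe (p n e : nat) : prime p -> (0 < n)%N ->
  exists j, (0 < j)%N /\
    map_poly (intr : int -> 'F_p) 'Phi_(p ^ e * n) = (map_poly intr 'Phi_n) ^+ j.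
Proof.
move=> pp n0; elim: e => [|e [j [j0 IH]]]; first by exists 1%N; rewrite expn0 mul1n expr1.
set N := (p ^ e * n)%N.
have N0 : (0 < N)%N by rewrite muln_gt0 expn_gt0 prime_gt0.
have E := congr1 (map_poly (intr : int -> 'F_p)) (@cycl_comp p N pp N0).
rewrite frob_comp // rmorphM /= /cf in E.
have nz : map_poly (intr : int -> 'F_p) 'Phi_N != 0.
  by apply: monic_neq0; apply: monic_map; apply: Cyclotomic_monic.
have [j' [j'0 Ej']] : exists j', (0 < j')%N /\
    map_poly (intr : int -> 'F_p) 'Phi_(p * N) = (map_poly intr 'Phi_N) ^+ j'.
  case: ifP E => _ E.
    by exists p; split; [exact: prime_gt0 | rewrite E rmorph1 mulr1].
  exists p.-1; split; first by rewrite -subn1 subn_gt0 prime_gt1.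
  apply: (mulIf nz); rewrite -E -exprSr prednK // ?prime_gt0 //.
exists (j * j')%N; split; first by rewrite muln_gt0 j0.
by rewrite expnS -mulnA Ej' IH exprM.
Qed.

Lemma lift_modp (p : nat) (f g : {poly int}) : prime p ->
  map_poly (intr : int -> 'F_p) f = map_poly intr g ->
  exists H, f = g + (p%:Z) *: H.
Proof.
move=> pp E.
have pc := pchar_Fp pp.
exists (\poly_(i < size (f - g)) (((f - g)`_i) %/ p%:Z)%Z).
apply/polyP => i; rewrite coefD coefZ coef_poly.
case: ltnP => hi; last first.
  by rewrite mulr0 addr0; apply/eqP; rewrite -subr_eq0 -coefB nth_default.
have dv : (p%:Z %| (f - g)`_i)%Z.
  have : (((f - g)`_i)%:~R : 'F_p) = 0.
    by rewrite -coef_map rmorphB /= E subrr coef0.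
  case: ((f - g)`_i) => n; rewrite ?NegzE /=.
    by move/eqP; rewrite -(dvdn_pcharf pc) => h; rewrite dvdzE.
  by rewrite rmorphN /= => /eqP; rewrite oppr_eq0 -(dvdn_pcharf pc) => h; rewrite dvdzE abszN.
by rewrite mulrC divzK // coefB addrC subrK.
Qed.

Lemma modp_rel (p m k e : nat) : prime p -> (0 < m)%N -> (0 < k)%N ->
  (m = p ^ e * k \/ k = p ^ e * m)%N ->
  exists s G H, (0 < s)%N /\ 'Phi_m ^+ s = 'Phi_k * G + (p%:Z) *: H.
Proof.
move=> pp m0 k0 [->|->].
  have [j [j0 Ej]] := @Phi_pe p k e pp k0.
  have [H EH] := @lift_modp p _ ('Phi_k ^+ j) pp (etrans Ej (esym (rmorphXn _ _ _))).
  exists 1%N, ('Phi_k ^+ j.-1), H; split => //.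
  by rewrite expr1 EH -exprS prednK.
have [j [j0 Ej]] := @Phi_pe p m e pp m0.
have [H EH] := @lift_modp p ('Phi_m ^+ j) ('Phi_(p ^ e * m)) pp (etrans (rmorphXn _ _ _) (esym Ej)).
by exists j, 1, H; rewrite mulr1.
Qed.

Lemma zdvd_mull (f g h : {poly int}) : zdvd f g -> zdvd f (h * g).
Proof. by case=> x ->; exists (h * x); rewrite mulrA. Qed.

Lemma zdvd_mulr (f g h : {poly int}) : zdvd f g -> zdvd f (g * h).
Proof. by move=> d; rewrite mulrC; apply: zdvd_mull. Qed.

Lemma zdvd_trans (f g h : {poly int}) : zdvd f g -> zdvd g h -> zdvd f h.
Proof. by case=> x -> [y ->]; exists (y * x); rewrite mulrA. Qed.

Lemma zdvd_exp (f g : {poly int}) n : zdvd f g -> zdvd (f ^+ n) (g ^+ n).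
Proof. by case=> x ->; exists (x ^+ n); rewrite exprMn. Qed.

Lemma prod_nseq_Phi N m : \prod_(j <- nseq N m) 'Phi_j = 'Phi_m ^+ N.
Proof. by elim: N => [|N IH]; rewrite ?big_nil ?expr0 // big_cons IH exprS. Qed.

Lemma prodPhi_monic (s : seq nat) : \prod_(j <- s) 'Phi_j \is monic.
Proof. by apply: monic_prod => j _; apply: Cyclotomic_monic. Qed.

Lemma size_prodPhi (s : seq nat) : all (fun j => 0 < j)%N s ->
  (size s < size (\prod_(j <- s) 'Phi_j)%R)%N.
Proof.
elim: s => [|j s IH] /=; first by rewrite big_nil size_poly1.
case/andP => j0 /IH h; rewrite big_cons size_Mmonic ?monic_neq0 ?Cyclotomic_monic ?prodPhi_monic //.
rewrite size_Cyclotomic addSn /=.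
have t0 : (0 < totient j)%N by rewrite totient_gt0.
exact: (leq_add t0 h).
Qed.

Lemma dvd_prodPhi (S' : pred nat) (F : {poly int}) (s : seq nat) :
  (forall j, S' j -> zdvd 'Phi_j F) -> all S' s ->
  zdvd (\prod_(j <- s) 'Phi_j) (F ^+ size s).
Proof.
move=> hS; elim: s => [|j s IH] /=; first by rewrite big_nil expr0; exists 1; rewrite mulr1.
case/andP => /hS [x Ex] /IH [y Ey]; exists (x * y).
by rewrite big_cons exprS Ey {1}Ex; ring.
Qed.

Definition bser (E f : {poly int}) : {poly int} := \sum_(i < size f) E ^+ i.

Lemma geom_diff (E : {poly int}) n1 n2 : (n1 <= n2)%N ->
  \sum_(i < n2) E ^+ i - \sum_(i < n1) E ^+ i = E ^+ n1 * \sum_(i < n2 - n1) E ^+ i.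
Proof.
move=> h; rewrite -!(big_mkord xpredT) (@big_cat_nat _ _ _ n1 0 n2 xpredT _ (leq0n n1) h) /=.
rewrite [X in X - _]addrC addrK.
have -> : \sum_(n1 <= i < n2) E ^+ i = \sum_(0 + n1 <= i < n2) E ^+ i by rewrite add0n.
rewrite big_addn big_distrr /=.
by apply: eq_bigr => i _; rewrite exprD mulrC.
Qed.

Lemma compat_bser (S' : pred nat) (F w : {poly int}) :
  (forall j, S' j -> (0 < j)%N /\ zdvd 'Phi_j F) -> compat S' (bser (F * w)).
Proof.
move=> hS f0 g0 [s1 [a1 ->]] [s2 [a2 ->]] [h Eh].
set f := \prod_(j <- s1) 'Phi_j in Eh *; set g := \prod_(j <- s2) 'Phi_j in Eh *.
have fm : f \is monic := prodPhi_monic s1.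
have gm : g \is monic := prodPhi_monic s2.
have h0 : h != 0 by apply: contraTneq gm => h0; rewrite Eh h0 mul0r monicE lead_coef0 eq_sym oner_eq0.
have le : (size f <= size g)%N.
  rewrite Eh size_Mmonic //; have := size_poly_gt0 h; rewrite h0 => hh; lia.
rewrite /bser geom_diff //; apply: zdvd_mulr.
have s1p : all (fun j => 0 < j)%N s1.
  by apply/allP => j /(allP a1) /hS [].
have sz := @size_prodPhi s1 s1p.
have a1' : all S' s1 by apply/allP => j /(allP a1).
have := @dvd_prodPhi S' F s1 (fun j Sj => (hS j Sj).2) a1' => -[x Ex].
exists (x * F ^+ (size f - size s1) * w ^+ size f).
rewrite exprMn -{1}(subnKC (ltnW sz)) exprD Ex -/f.
by rewrite -!mulrA; congr (_ * _); rewrite mulrC -mulrA.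
Qed.

Lemma pow_split (K A B : {poly int}) i : exists g, (K * A + B) ^+ i = g * K + B ^+ i.
Proof.
elim: i => [|i [g Eg]]; first by exists 0; rewrite !expr0 mul0r add0r.
exists (g * (K * A + B) + B ^+ i * A); rewrite !exprSr Eg.
by move: (B ^+ i) => Bi; ring.
Qed.

Lemma coef_zero_of_pdiv (p : nat) (c : int) : (1 < p)%N ->
  (forall i, exists z : int, c = (p%:Z ^+ i) * z) -> c = 0.
Proof.
move=> p1 h; have [z Ez] := h (absz c).
apply/eqP; apply: contraT => c0.
have z0 : z != 0 by apply: contraNneq c0 => z0; rewrite Ez z0 mulr0.
have := congr1 absz Ez; rewrite abszM abszX /= => e.
have : (absz c < p ^ absz c)%N by apply: ltn_expl.
rewrite {1}e; have : (0 < absz z)%N by rewrite absz_gt0.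
move: (p ^ absz c)%N => P zp; rewrite -{2}[P]muln1 ltn_mul2l.
by case/andP => _; rewrite ltnNge zp.
Qed.

Lemma phistar_pow (S : pred nat) m N : S m -> PhiStar S ('Phi_m ^+ N).
Proof.
move=> Sm; exists (nseq N m); split; last by rewrite prod_nseq_Phi.
by rewrite all_nseq /in_mem /= Sm orbT.
Qed.

Lemma phistar_powK (S : pred nat) m k N : S m -> S k -> PhiStar S ('Phi_m ^+ N * 'Phi_k).
Proof.
move=> Sm Sk; exists (nseq N m ++ [:: k]); split.
  by rewrite all_cat all_nseq /in_mem /= Sm Sk orbT.
by rewrite big_cat /= prod_nseq_Phi big_seq1.
Qed.

Lemma phistar1 (S : pred nat) k : S k -> PhiStar S 'Phi_k.
Proof. by move=> Sk; exists [:: k]; rewrite big_seq1 /= /in_mem /= Sk. Qed.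

Lemma alg_key (K P E c bP h1 h2 h3 EL Mx g C Hi : {poly int}) :
  c - bP = (h2 + h3) * P - h1 * K -> (1 - E) * bP = 1 - EL -> EL = Mx * P ->
  P = g * K + C * Hi ->
  (1 - E) * c - 1 = (((1 - E) * (h2 + h3) - Mx) * g - (1 - E) * h1) * K
                    + C * (((1 - E) * (h2 + h3) - Mx) * Hi).
Proof.
move=> e1 e2 e3 e4.
have -> : (1 - E) * c - 1 = (1 - E) * (c - bP) + ((1 - E) * bP - 1) by ring.
by rewrite e1 e2 e3 e4; ring.
Qed.

Lemma alg_Ec (K P aK aP aPK bP h1 h2 h3 : {poly int}) :
  aPK - aK = h1 * K -> aPK - aP = h2 * P -> aP - bP = h3 * P ->
  aK - bP = (h2 + h3) * P - h1 * K.
Proof. by move=> e1 e2 e3; rewrite mulrDl -e1 -e2 -e3; ring. Qed.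

Lemma alg_fin (kap q c F U V w t l D eps : int) :
  kap * q = (1 - F * w) * c - 1 -> D = U * F + V * kap -> kap = D * t + eps ->
  eps * l = -1 -> w = U * t * l -> kap * (q + (l - V * t * l) * c) = -1.
Proof.
move=> e1 e2 e3 e4 e5.
have aux : 1 - F * w + kap * (l - V * t * l) =
    - (t * l) * (U * F + V * kap - D) + l * (kap - (D * t + eps)) + (1 + eps * l).
  by rewrite e5; ring.
rewrite -e2 -e3 subrr e4 subrr !mulr0 !addr0 in aux.
rewrite mulrDr e1.
have -> : (1 - F * w) = - (kap * (l - V * t * l)) by apply/eqP; rewrite -addr_eq0 aux.
ring.
Qed.

Arguments alg_key {K P E c bP h1 h2 h3 EL Mx g C Hi}.
Arguments alg_Ec {K P aK aP aPK bP h1 h2 h3}.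
Arguments alg_fin {kap q c F U V w t l D eps}.

Lemma powL (M Y : {poly int}) L N : (N <= L)%N ->
  (M * Y) ^+ L = (M ^+ (L - N) * Y ^+ L) * M ^+ N.
Proof. by move=> h; rewrite exprMn -{1}(subnK h) exprD -!mulrA [Y ^+ L * _]mulrC. Qed.

Arguments powL M Y {L N}.

Lemma core (S S' : pred nat) (m k p s : nat) (F G H U V : {poly int}) (D : int) :
  S' m -> S m -> S k -> (0 < k)%N -> (1 < p)%N ->
  (forall j, S' j -> (0 < j)%N /\ zdvd 'Phi_j F) ->
  (0 < s)%N -> 'Phi_m ^+ s = 'Phi_k * G + (p%:Z) *: H ->
  D != 0 -> D%:P = U * F + V * 'Phi_k ->
  ~ rho_surjective S S'.
Proof.
move=> S'm Sm Sk k0 p1 hS s0 EMs D0 ED.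
have Km : 'Phi_k \is monic := Cyclotomic_monic k.
have [l El] : exists l, ('Phi_k).[0] * l = -1.
  have := prod_Cyclotomic k0; rewrite (big_rem k) -?dvdn_divisors // => E.
  exists (\prod_(d <- rem k (divisors k)) 'Phi_d).[0].
  by rewrite -hornerM E !hornerE expr0n /= gtn_eqF // sub0r.
have [Q0 EQ0] : exists Q0, 'Phi_k = Q0 * 'X + (('Phi_k).[0])%:P.
  have : root ('Phi_k - (('Phi_k).[0])%:P) 0 by rewrite /root !hornerE subrr.
  case/factor_theorem => Q0 EQ; exists Q0.
  have -> : 'X = 'X - 0%:P :> {poly int} by rewrite polyC0 subr0.
  by rewrite -EQ subrK.
have [y Hy] : exists y : int, ('Phi_k).[D * y] ^+ 2 != 1.
  set P := 'Phi_k ^+ 2 - 1.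
  have szK : (1 < size 'Phi_k)%N by rewrite size_Cyclotomic ltnS totient_gt0.
  have P0 : P != 0.
    rewrite subr_eq0; apply/eqP => e; have := congr1 (fun q : {poly int} => size q) e.
    rewrite expr2 size_Mmonic ?monic_neq0 // size_poly1; lia.
  set rs := [seq D * (i%:Z) | i <- iota 0 (size P)].
  have urs : uniq rs.
    rewrite map_inj_uniq ?iota_uniq // => i j /(mulfI D0) [].
    by [].
  have : ~~ all (root P) rs.
    apply: contraL (leqnn (size P)) => al; rewrite -ltnNge.
    by have := max_poly_roots P0 al urs; rewrite size_map size_iota.
  case/allPn => x /mapP [i _ ->]; rewrite /root /P !hornerE subr_eq0 => hx.
  by exists i%:Z.
set a := D * y.
set eps := ('Phi_k).[0] in El EQ0.
set t := Q0.[a] * y.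
have Ka : ('Phi_k).[a] = D * t + eps.
  by rewrite {1}EQ0 hornerD hornerMX hornerC /t /a mulrCA.
set w := U.[a] * t * l.
set E := F * w%:P.
move=> /(_ (bser E) (@compat_bser S' F w%:P hS)) [a' [ca lift]].
set c := a' 'Phi_k.
set X0 := (1 - E) * c - 1.
have key : forall i, exists u v, X0 = u * 'Phi_k + (p%:Z ^+ i)%:P * v.
  move=> i; set N := (s * i)%N; set P := 'Phi_m ^+ N.
  have [h1 E1] := ca _ _ (@phistar1 S k Sk) (@phistar_powK S m k N Sm Sk) (ex_intro _ P erefl).
  have [h2 E2] := ca _ _ (@phistar_pow S m N Sm) (@phistar_powK S m k N Sm Sk)
    (ex_intro _ 'Phi_k (mulrC _ _)).
  have [h3 E3] := lift P (@phistar_pow S' m N S'm).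
  have Ec := alg_Ec E1 E2 E3.
  have Eb : (1 - E) * bser E P = 1 - E ^+ size P.
    rewrite /bser; have e := subrX1 E (size P).
    by rewrite -[1 - E]opprB mulNr -e opprB.
  have [hF EF] := (hS m S'm).2.
  have sP : (N < size P)%N.
    have := @size_prodPhi (nseq N m); rewrite prod_nseq_Phi size_nseq; apply.
    by rewrite all_nseq (hS m S'm).1 orbT.
  have EL : E ^+ size P = ('Phi_m ^+ (size P - N) * (hF * w%:P) ^+ size P) * P.
    have -> : E = 'Phi_m * (hF * w%:P) by rewrite /E EF [hF * _]mulrC -mulrA.
    exact: (powL _ _ (ltnW sP)).
  have [g Eg] := pow_split 'Phi_k G (p%:Z *: H) i.
  have PE : P = g * 'Phi_k + (p%:Z ^+ i)%:P * H ^+ i.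
    by rewrite /P /N exprM EMs Eg exprZn mul_polyC.
  by eexists; eexists; exact: (alg_key Ec Eb EL PE).
have R0 : Pdiv.CommonRing.rmodp X0 'Phi_k = 0.
  apply/polyP => j; rewrite coef0; apply: (@coef_zero_of_pdiv p _ p1) => i.
  have [u [v ->]] := key i.
  rewrite Pdiv.RingMonic.rmodpD // Pdiv.RingMonic.rmodp_mull // add0r mul_polyC.
  rewrite Pdiv.RingMonic.rmodpZ // coefZ.
  by exists ((Pdiv.CommonRing.rmodp v 'Phi_k)`_j).
have EX := Pdiv.RingMonic.rdivp_eq Km X0; rewrite R0 addr0 in EX.
set Qd := Pdiv.CommonRing.rdivp X0 'Phi_k in EX.
have Ea := congr1 (horner^~ a) EX; rewrite /= /X0 /E -polyC1 !(hornerM, hornerD, hornerN, hornerC, hornerC) in Ea.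
have EDa := congr1 (horner^~ a) ED; rewrite /= !(hornerM, hornerD, hornerN, hornerC, hornerC) in EDa.
set kap := ('Phi_k).[a] in Ka Ea EDa.
have fin : kap * (Qd.[a] + (l - V.[a] * t * l) * c.[a]) = -1.
  apply: (alg_fin _ EDa Ka El) => //.
  by rewrite mulrC Ea.
have k1 : absz kap = 1%N.
  have := congr1 absz fin; rewrite abszM /= => /eqP; rewrite muln_eq1 => /andP[/eqP -> _].
  by [].
move: Hy; rewrite -/a -/kap.
have -> : kap ^+ 2 = 1.
  rewrite -[kap ^+ 2]ger0_norm ?sqr_ge0 // -abszE abszX k1.
  by [].
by rewrite eqxx.
Qed.

Lemma rootPhiC (n : nat) (z : algC) : (0 < n)%N ->
  root (map_poly (intr : int -> algC) 'Phi_n) z = n.-primitive_root z.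
Proof.
move=> n0; have [w pw] := C_prim_root_exists n0.
by rewrite (Cintr_Cyclotomic pw) root_cyclotomic.
Qed.

Lemma res_nonzero (F K : {poly int}) : (1 < size F)%N -> (1 < size K)%N ->
  (forall z : algC, root (map_poly intr F) z -> root (map_poly intr K) z -> False) ->
  exists U V (D : int), D != 0 /\ D%:P = U * F + V * K.
Proof.
move=> sF sK nc.
have [[U V] _ E] := resultant_in_ideal sF sK.
exists U, V, (resultant F K); split => //.
rewrite resultant_eq0 -leqNgt.
set g := Pdiv.Idomain.gcdp F K.
rewrite leqNgt; apply/negP => sg.
have : size (map_poly (intr : int -> algC) g) != 1%N.
  by rewrite size_map_inj_poly ?rmorph0 //; [rewrite neq_ltn sg orbT | exact: intr_inj].
case/closed_rootP => z rz.
have rt : forall P, Pdiv.Idomain.dvdp g P -> root (map_poly (intr : int -> algC) P) z.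
  move=> P /Pdiv.Idomain.dvdpP [[c q] /= c0 Ec].
  have := congr1 (fun r => (map_poly (intr : int -> algC) r).[z]) Ec.
  rewrite /= map_polyZ rmorphM /= hornerZ hornerM (rootP rz) mulr0.
  move/eqP; rewrite mulf_eq0 intr_eq0 (negbTE c0) /= => /eqP.
  by move/rootP.
exact: (nc z (rt _ (Pdiv.Idomain.dvdp_gcdl F K)) (rt _ (Pdiv.Idomain.dvdp_gcdr F K))).
Qed.

Lemma PhiDvdXn (j N : nat) : (0 < N)%N -> (j %| N)%N -> zdvd 'Phi_j ('X^N - 1).
Proof.
move=> N0 jN; rewrite -prod_Cyclotomic // (big_rem j) -?dvdn_divisors //=.
by exists (\prod_(d <- rem j (divisors N)) 'Phi_d); rewrite mulrC.
Qed.

Lemma rootXnC (N : nat) (z : algC) :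
  root (map_poly (intr : int -> algC) ('X^N - 1)) z = (z ^+ N == 1).
Proof. by rewrite rmorphB rmorph1 /= map_polyXn /root !hornerE subr_eq0. Qed.

Lemma prim_uniq (m n : nat) (z : algC) :
  m.-primitive_root z -> n.-primitive_root z -> m = n.
Proof.
move=> pm pn; apply/eqP; rewrite eqn_dvd.
by rewrite (prim_order_dvd pm) (prim_expr_order pn) (prim_order_dvd pn) (prim_expr_order pm) !eqxx.
Qed.

Lemma sizePhi_gt1 n : (0 < n)%N -> (1 < size 'Phi_n)%N.
Proof. by move=> n0; rewrite size_Cyclotomic ltnS totient_gt0. Qed.

Lemma part1 (m n : nat) : (0 < m)%N -> (0 < n)%N -> m <> n ->
  (exists (p : nat) (e : int), prime p /\ (m%:R / n%:R : rat) = (p%:R : rat) ^ e) ->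
  ~ rho_surjective (fun k => (k == m) || (k == n)) (fun k => k == m).
Proof.
move=> m0 n0 mn [p [e [pp E]]].
have [e' He'] : exists e', (m = p ^ e' * n \/ n = p ^ e' * m)%N.
  have n0' : (n%:R : rat) != 0 by rewrite pnatr_eq0 -lt0n.
  have Em : (m%:R : rat) = p%:R ^ e * n%:R by rewrite -E divfK.
  case: e {E} Em => j Em.
    exists j; left; apply/eqP; rewrite -(eqr_nat rat) natrM natrX Em.
    by [].
  exists j.+1; right; apply/eqP; rewrite -(eqr_nat rat) natrM natrX Em.
  have pj : (p%:R ^+ j.+1 : rat) != 0 by rewrite expf_eq0 pnatr_eq0 -lt0n prime_gt0.
  rewrite mulrA.
  have -> : (p%:R ^+ j.+1 : rat) * p%:R ^ Negz j = 1 by apply: mulfV.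
  by rewrite mul1r.
have [s [G [H [s0 EMs]]]] := @modp_rel p m n e' pp m0 n0 He'.
have [U [V [D [D0 ED]]]] := @res_nonzero 'Phi_m 'Phi_n (@sizePhi_gt1 m m0) (@sizePhi_gt1 n n0)
  (fun z r1 r2 => mn (@prim_uniq m n z (etrans (esym (@rootPhiC m z m0)) r1) (etrans (esym (@rootPhiC n z n0)) r2))).
apply: (@core _ _ m n p s 'Phi_m G H U V D) => //.
- by rewrite /= eqxx.
- by rewrite /= eqxx orbT.
- exact: prime_gt1.
by move=> j /= /eqP ->; split => //; exists 1; rewrite mul1r.
Qed.

Lemma part2 (m n : nat) : (0 < m)%N -> (0 < n)%N -> (m %| n)%N -> m <> n ->
  ~ rho_surjective (divset n) (divset m).
Proof.
move=> m0 n0 mn ne.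
have En : n = (m * (n %/ m))%N by rewrite mulnC divnK.
have q1 : (1 < n %/ m)%N.
  case: (n %/ m)%N En => [|[|q]] En //; first by move: n0; rewrite En muln0.
  by move: ne; rewrite En muln1.
have pp := pdiv_prime q1.
set p := pdiv (n %/ m)%N in pp.
set k := (m * p)%N.
have k0 : (0 < k)%N by rewrite muln_gt0 m0 prime_gt0.
have kn : (k %| n)%N by rewrite [in X in (_ %| X)%N]En dvdn_pmul2l // pdiv_dvd.
have ek : (k = p ^ 1 * m)%N by rewrite expn1 mulnC.
have [s [G [H [s0 EMs]]]] := @modp_rel p m k 1 pp m0 k0 (or_intror ek).
have hsF : (1 < size ('X^m - 1 : {poly int})%R)%N by rewrite size_Xn_sub_1 // ltnS.
have nc : forall z : algC, root (map_poly intr ('X^m - 1)) z ->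
    root (map_poly intr 'Phi_k) z -> False.
  move=> z r1 r2; rewrite rootXnC in r1; rewrite (@rootPhiC k z k0) in r2.
  move: r1; rewrite -(prim_order_dvd r2) /k -{2}[m]muln1 dvdn_pmul2l // dvdn1.
  by move/eqP => p1; move: pp; rewrite p1.
have [U [V [D [D0 ED]]]] := @res_nonzero _ _ hsF (@sizePhi_gt1 k k0) nc.
apply: (@core _ _ m k p s ('X^m - 1) G H U V D _ _ _ k0 _ _ s0 EMs D0 ED).
- by rewrite /divset /= m0 dvdnn.
- by rewrite /divset /= m0 mn.
- by rewrite /divset /= k0 kn.
- exact: prime_gt1.
by move=> j /andP [j0 jm]; split => //; apply: PhiDvdXn.
Qed.

Lemma prod_pos (s : seq nat) : all (fun k => 0 < k)%N s -> (0 < \prod_(j <- s) j)%N.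
Proof.
elim: s => [|j s IH] /=; first by rewrite big_nil.
by case/andP => j0 /IH h; rewrite big_cons muln_gt0 j0.
Qed.

Lemma part3 (s : seq nat) : s <> [::] -> all (fun k => 0 < k)%N s ->
  ~ rho_surjective Nset (fun k => k \in s).
Proof.
case: s => [//|m s'] _ al.
have m0 : (0 < m)%N by case/andP: al.
set N := (\prod_(j <- m :: s') j)%N.
have N0 : (0 < N)%N by apply: prod_pos.
have jN : forall j, j \in m :: s' -> (j %| N)%N.
  by move=> j js; rewrite /N (big_rem j js) /= dvdn_mulr.
set k := (m * 2 ^ N)%N.
have k0 : (0 < k)%N by rewrite muln_gt0 m0 expn_gt0.
have nkN : ~~ (k %| N)%N.
  apply/negP => /(dvdn_leq N0); rewrite leqNgt => /negP; apply.
  apply: (leq_trans (ltn_expl N (isT : (1 < 2)%N))).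
  by rewrite /k leq_pmull.
have ek : (k = 2 ^ N * m)%N by rewrite mulnC.
have [s [G [H [s0 EMs]]]] := @modp_rel 2 m k N (isT : prime 2) m0 k0 (or_intror ek).
have hsF : (1 < size ('X^N - 1 : {poly int})%R)%N by rewrite size_Xn_sub_1 // ltnS.
have nc : forall z : algC, root (map_poly intr ('X^N - 1)) z ->
    root (map_poly intr 'Phi_k) z -> False.
  move=> z r1 r2; rewrite rootXnC in r1; rewrite (@rootPhiC k z k0) in r2.
  by move: nkN; rewrite (prim_order_dvd r2) r1.
have [U [V [D [D0 ED]]]] := @res_nonzero _ _ hsF (@sizePhi_gt1 k k0) nc.
apply: (@core _ _ m k 2 s ('X^N - 1) G H U V D _ _ _ k0 _ _ s0 EMs D0 ED).
- exact: mem_head.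
- exact: m0.
- exact: k0.
- by [].
move=> j js; split; first by apply: (allP al).
exact: PhiDvdXn (jN j js).
Qed.

Theorem proposition7p7 :
  (* (1) *)
  (forall m n : nat, (0 < m)%N -> (0 < n)%N -> m <> n ->
     (exists (p : nat) (e : int), prime p /\
        (m%:R / n%:R : rat) = (p%:R : rat) ^ e) ->
     ~ rho_surjective (fun k => (k == m) || (k == n)) (fun k => k == m))
  /\
  (* (2) *)
  (forall m n : nat, (0 < m)%N -> (0 < n)%N -> (m %| n)%N -> m <> n ->
     ~ rho_surjective (divset n) (divset m))
  /\
  (* (3) *)
  (forall s : seq nat, s <> [::] -> all (fun k => 0 < k)%N s ->
     ~ rho_surjective Nset (fun k => k \in s)).
Proof.
split; first exact: part1.
split; first exact: part2.
exact: part3.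
Qed.
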